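(* Let $n\ge 5$, $k\in\{2,\dots,n-3\}$, $\gamma>0$, and let $0<x_1\le x_2\le\dots\le x_{n-1}$ be real numbers. Assume that $$x_I+x_{I^*}=2\gamma$$ for all $I\subset\{1,\dots,n-1\}$ with $|I|=k$, where $I^*:=\{n-i: i\in I\}$. Then $x_1=\dots=x_{n-1}$.
   Context: For $I\subset\{1,\dots,n-1\}$, $x_I:=\prod_{\iota\in I}x_\iota$ and $|I|$ is the cardinality of $I$. *)

(* Defs.v *)
From mathcomp Require Import all_boot all_order all_algebra.
Set Implicit Arguments. Unset Strict Implicit. Unset Printing Implicit Defensive.
Import Order.TTheory GRing.Theory Num.Theory.
Local Open Scope ring_scope.

(* Indices 1..n-1 are represented as elements of 'I_n different from 0.
   x_I := prod_{i in I} x_i. *)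
Definition xprod (R : comNzRingType) (n : nat) (x : 'I_n -> R) (I : {set 'I_n}) : R :=
  \prod_(i in I) x i.

(* I^* := { n - i : i in I }; for 0 < i < n, insubd i (n - i) is the ordinal n - i *)
Definition star (n : nat) (I : {set 'I_n}) : {set 'I_n} :=
  [set (insubd i (n - val i)%N : 'I_n) | i in I].

(* Main.v *)
Require Import Defs.
From mathcomp Require Import all_boot all_order all_algebra.
From mathcomp Require Import zify ring lra.
Import Order.TTheory GRing.Theory Num.Theory.
Local Open Scope ring_scope.

Definition se {n : nat} (i : 'I_n) : 'I_n := insubd i (n - val i)%N.

Lemma se_val {n} (i : 'I_n) : (0 < i)%N -> val (se i) = (n - i)%N.
Proof. move=> hi; have := ltn_ord i => hn; have h : (n - i < n)%N by lia. by rewrite /se val_insubd h. Qed.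

Lemma star_setU1 {n} (a : 'I_n) (A : {set 'I_n}) : star (a |: A) = se a |: star A.
Proof. by rewrite /star imsetU1. Qed.

Lemma se_inj {n} (i j : 'I_n) : (0 < i)%N -> (0 < j)%N -> se i = se j -> i = j.
Proof.
move=> hi hj /(congr1 val); rewrite !se_val // => h; apply: val_inj => /=.
have := ltn_ord i; have := ltn_ord j; lia.
Qed.

Lemma star_pos {n} (A : {set 'I_n}) : (forall i, i \in A -> (0 < i)%N) ->
  forall j, j \in star A -> (0 < j)%N.
Proof.
move=> hA j /imsetP [i iA ->]; have := hA _ iA; move=> hi.
have := se_val _ hi; rewrite /se => ->; have := ltn_ord i; lia.
Qed.

Lemma star_mid {n} (A : {set 'I_n}) : (forall i, i \in A -> (2 <= i <= n - 2)%N) ->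
  forall j, j \in star A -> (2 <= j <= n - 2)%N.
Proof.
move=> hA j /imsetP [i iA ->]; have := hA _ iA; move=> hi.
have hi0 : (0 < i)%N by lia.
have := se_val _ hi0; rewrite /se => ->; have := ltn_ord i; lia.
Qed.

Lemma star_rng {n} (A : {set 'I_n}) a b : (0 < a)%N -> (forall i, i \in A -> (a <= i <= b)%N) ->
  forall j, j \in star A -> (n - b <= j <= n - a)%N.
Proof.
move=> a0 hA j /imsetP [i iA ->]; have := hA _ iA; move=> hi.
have hi0 : (0 < i)%N by lia.
have := se_val _ hi0; rewrite /se => ->; have := ltn_ord i; lia.
Qed.

Lemma card_star {n} (A : {set 'I_n}) : (forall i, i \in A -> (0 < i)%N) ->
  #|star A| = #|A|.
Proof.
move=> hA; rewrite /star card_in_imset // => i j iA jA h.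
by apply: se_inj; [apply: hA| apply: hA|].
Qed.

Lemma se_notin {n} (A : {set 'I_n}) (a : 'I_n) : (forall i, i \in A -> (0 < i)%N) ->
  (0 < a)%N -> a \notin A -> se a \notin star A.
Proof.
move=> hA ha aA; apply/negP => /imsetP [i iA h].
have e : a = i by apply: se_inj (hA _ iA) h.
by move: aA; rewrite e iA.
Qed.

Lemma xprodU1 {R : comNzRingType} {n} (x : 'I_n -> R) (a : 'I_n) (A : {set 'I_n}) :
  a \notin A -> xprod x (a |: A) = x a * xprod x A.
Proof. by move=> h; rewrite /xprod big_setU1. Qed.

Lemma xprod_const {R : comNzRingType} {n} (x : 'I_n -> R) c (A : {set 'I_n}) :
  (forall i, i \in A -> x i = c) -> xprod x A = c ^+ #|A|.
Proof. by move=> h; rewrite /xprod (eq_bigr (fun _ => c)) ?prodr_const. Qed.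

Definition Mid n a b : {set 'I_n} := [set i : 'I_n | (a <= i < b)%N].

Lemma card_Mid n a b : (a <= b <= n)%N -> #|Mid n a b| = (b - a)%N.
Proof.
elim: b => [|b IH] h.
  have -> : Mid n a 0 = set0 by apply/setP => i; rewrite !inE; lia.
  rewrite cards0; lia.
case: (leqP a b) => hab; last first.
  have -> : Mid n a b.+1 = set0 by apply/setP => i; rewrite !inE; lia.
  rewrite cards0; lia.
have hb : (b < n)%N by lia.
have -> : Mid n a b.+1 = (Ordinal hb) |: Mid n a b.
  apply/setP => i; rewrite !inE -val_eqE /=; lia.
rewrite cardsU1 IH; last lia.
rewrite !inE /=; have -> : (a <= b < b)%N = false by lia.
simpl; lia.
Qed.

Lemma in_Mid {n} a b (i : 'I_n) : (i \in Mid n a b) = (a <= i < b)%N.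
Proof. by rewrite inE. Qed.

Lemma xprod_gt0 {R : realFieldType} {n} (x : 'I_n -> R) (A : {set 'I_n}) :
  (forall i, i \in A -> 0 < x i) -> 0 < xprod x A.
Proof. by move=> h; rewrite /xprod; apply: prodr_gt0. Qed.

Ltac nlia := repeat match goal with H : ?T |- _ =>
  lazymatch type of T with Prop =>
    lazymatch T with
    | is_true (~~ _) => clear H
    | is_true (_ \in _) => clear H
    | is_true _ => fail
    | @eq nat _ _ => fail
    | _ => clear H
    end
  end
end; lia.

Theorem lemma5p1 (R : realFieldType) (n k : nat) (gamma : R) (x : 'I_n -> R) :
  (5 <= n)%N -> (2 <= k)%N -> (k <= n - 3)%N -> 0 < gamma ->
  (forall i : 'I_n, (0 < i)%N -> 0 < x i) ->
  (forall i j : 'I_n, (0 < i)%N -> (i <= j)%N -> x i <= x j) ->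
  (forall I : {set 'I_n}, (forall i : 'I_n, i \in I -> (0 < i)%N) -> #|I| = k ->
     xprod x I + xprod x (star I) = 2 * gamma) ->
  forall i j : 'I_n, (0 < i)%N -> (0 < j)%N -> x i = x j.
Proof.
move=> n5 k2 kn g0 xpos xmon hI.
have [m em] : exists m, n = m.+4.+1 by exists (n - 5)%N; nlia.
have [j ej] : exists j, k = j.+2 by exists (k - 2)%N; nlia.
have {}kn : (j <= m)%N by nlia.
clear n5 k2.
have h1 : (1 < n)%N by nlia.
have hn1 : (m.+4 < n)%N by nlia.
have h2 : (2 < n)%N by nlia.
have hn2 : (m.+3 < n)%N by nlia.
pose o1 := Ordinal h1; pose on1 := Ordinal hn1.
pose o2 := Ordinal h2; pose on2 := Ordinal hn2.
have vo1 : nat_of_ord o1 = 1%N by [].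
have von1 : nat_of_ord on1 = m.+4 by [].
have vo2 : nat_of_ord o2 = 2%N by [].
have von2 : nat_of_ord on2 = m.+3 by [].
have se1 : se o1 = on1 by apply: val_inj; rewrite se_val //= em.
have sen1 : se on1 = o1 by apply: val_inj; rewrite se_val //= em; nlia.
have se2 : se o2 = on2 by apply: val_inj; rewrite se_val //= em.
have sen2 : se on2 = o2 by apply: val_inj; rewrite se_val //= em; nlia.
have outer : forall i : 'I_n, (0 < i)%N -> x o1 <= x i <= x on1.
  move=> i hi; rewrite !xmon //=; have := ltn_ord i; nlia.
have L1 : forall S : {set 'I_n}, (forall i, i \in S -> (0 < i)%N) -> #|S| = j.+1 ->
    forall a : 'I_n, (0 < a)%N -> a \notin S ->
    x a * xprod x S + x (se a) * xprod x (star S) = 2 * gamma.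
  move=> S hS cS a ha aS.
  have := hI (a |: S); rewrite star_setU1 !xprodU1 //; last exact: se_notin.
  apply.
    by move=> i; rewrite in_setU1 => /orP [/eqP -> //| /hS].
  by rewrite cardsU1 aS cS ej.
case: (eqVneq (x o1) (x on1)) => [e|ne].
  have he : forall i : 'I_n, (0 < i)%N -> x i = x o1.
    move=> i hi; have := outer i hi; rewrite -e => /andP [a b]; apply/eqP.
    by rewrite eq_le a b.
  by move=> i i' hi hi'; rewrite !he.
suff : x o1 = x on1 by move/eqP; rewrite (negbTE ne).
have hA : forall S : {set 'I_n}, (forall i, i \in S -> (0 < i)%N) -> #|S| = j.+1 ->
    o1 \notin S -> on1 \notin S -> xprod x S = xprod x (star S).
  move=> S hS cS n1 nn1.
  have := L1 S hS cS o1 isT n1; have := L1 S hS cS on1 isT nn1.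
  rewrite se1 sen1 => e1 e2.
  have : (x o1 - x on1) * (xprod x S - xprod x (star S)) = 0.
    have -> : (x o1 - x on1) * (xprod x S - xprod x (star S)) =
      (x o1 * xprod x S + x on1 * xprod x (star S)) - (x on1 * xprod x S + x o1 * xprod x (star S)) by ring.
    by rewrite e1 e2 subrr.
  move/eqP; rewrite mulf_eq0 => /orP [/eqP h | /eqP h].
    by move/eqP: h; rewrite subr_eq0 (negbTE ne).
  by apply/eqP; rewrite -subr_eq0 h.
pose M := Mid n 3 j.+3.
have Mr : forall i, i \in M -> (3 <= i <= j.+2)%N by move=> i; rewrite in_Mid; nlia.
have Mpos : forall i, i \in M -> (0 < i)%N by move=> i /Mr; nlia.
have cM : #|M| = j by rewrite card_Mid; nlia.
have o2M : o2 \notin M by rewrite in_Mid.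
have on2M : on2 \notin M by rewrite in_Mid /=; nlia.
have sMr := star_rng M 3 j.+2 isT Mr.
have pos1 : forall S : {set 'I_n}, (forall i, i \in S -> (0 < i)%N) -> forall a : 'I_n, (0 < a)%N ->
   forall i, i \in a |: S -> (0 < i)%N.
  by move=> S hS a ha i; rewrite in_setU1 => /orP [/eqP -> //| /hS].
have nin : forall (a b : 'I_n) (S : {set 'I_n}), a != b -> a \notin S -> a \notin b |: S.
  by move=> a b S ab aS; rewrite in_setU1 negb_or ab aS.
have ne12 : o1 != o2 by rewrite -val_eqE.
have ne1n2 : o1 != on2 by rewrite -val_eqE.
have nen12 : on1 != o2 by rewrite -val_eqE.
have nen1n2 : on1 != on2 by rewrite -val_eqE /= eqSS; apply/eqP; nlia.
have o1M : o1 \notin M by rewrite in_Mid.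
have on1M : on1 \notin M by rewrite in_Mid /=; nlia.
have eA := hA (o2 |: M) (pos1 _ Mpos o2 isT) (ltac:(by rewrite cardsU1 o2M cM))
   (nin _ _ _ ne12 o1M) (nin _ _ _ nen12 on1M).
have eB := hA (on2 |: M) (pos1 _ Mpos on2 isT) (ltac:(by rewrite cardsU1 on2M cM))
   (nin _ _ _ ne1n2 o1M) (nin _ _ _ nen1n2 on1M).
have o2sM : o2 \notin star M by apply/negP => /sMr/=; nlia.
have on2sM : on2 \notin star M by apply/negP => /sMr/=; nlia.
move: eA eB; rewrite !star_setU1 se2 sen2 !xprodU1 // => eA eB.
have p0 : 0 < xprod x M by apply: xprod_gt0 => i /Mpos; apply: xpos.
have q0 : 0 < xprod x (star M) by apply: xprod_gt0 => i /(star_pos _ Mpos); apply: xpos.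
have u0 : 0 < x o2 by apply: xpos.
have v0 : 0 < x on2 by apply: xpos.
have uv : x o2 = x on2 by nra.
pose c := x o2.
have xmid : forall i : 'I_n, (2 <= i <= m.+3)%N -> x i = c.
  move=> i hi; apply/eqP; rewrite eq_le; apply/andP; split.
    by rewrite /c uv; apply: xmon; rewrite /=; nlia.
  by apply: xmon; rewrite /=; nlia.
have cmid : forall A : {set 'I_n}, (forall i, i \in A -> (2 <= i <= m.+3)%N) ->
    xprod x A = c ^+ #|A| /\ xprod x (star A) = c ^+ #|A|.
  move=> A hA0; have Apos : forall i, i \in A -> (0 < i)%N by move=> i /hA0; nlia.
  have sA := star_rng A 2 m.+3 isT hA0.
  split; first by apply: xprod_const => i /hA0 /xmid.
  rewrite -(card_star _ Apos); apply: xprod_const => i /sA hi; apply: xmid.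
  nlia.
pose S1 := Mid n 2 j.+3.
have S1mid : forall i, i \in S1 -> (2 <= i <= m.+3)%N by move=> i; rewrite in_Mid; nlia.
have e1 := L1 S1 (ltac:(move=> i /S1mid; nlia)) (ltac:(rewrite card_Mid; nlia)) o1 isT
   (ltac:(by rewrite in_Mid)).
have [c1 c2] := cmid S1 S1mid.
rewrite se1 c1 c2 card_Mid in e1; last nlia.
pose I2 := Mid n 2 j.+4.
have I2mid : forall i, i \in I2 -> (2 <= i <= m.+3)%N by move=> i; rewrite in_Mid; nlia.
have e2 := hI I2 (ltac:(move=> i /I2mid; nlia)) (ltac:(rewrite card_Mid; nlia)).
have [d1 d2] := cmid I2 I2mid.
rewrite d1 d2 card_Mid in e2; last nlia.
pose I3 := Mid n 2 j.+2.
have I3mid : forall i, i \in I3 -> (2 <= i <= m.+3)%N by move=> i; rewrite in_Mid; nlia.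
have sI3 := star_rng I3 2 m.+3 isT I3mid.
have g2 : o1 \notin star I3 by apply/negP => /sI3/=; nlia.
have g4 : on1 \notin I3 by rewrite in_Mid /=; nlia.
have g1 : on1 \notin star I3 by apply/negP => /sI3/=; nlia.
have g0' : o1 \notin I3 by rewrite in_Mid.
have ne11 : on1 != o1 by rewrite -val_eqE.
have g3 : on1 \notin o1 |: star I3 by apply: nin.
have g5 : o1 \notin on1 |: I3 by apply: nin; rewrite // eq_sym.
have e3 := hI (o1 |: (on1 |: I3)).
rewrite !star_setU1 se1 sen1 !xprodU1 // in e3.
have [f1 f2] := cmid I3 I3mid.
rewrite f1 f2 card_Mid in e3; last nlia.
have I3pos : forall i : 'I_n, i \in o1 |: (on1 |: I3) -> (0 < i)%N.
  by move=> i; rewrite !in_setU1 => /orP [/eqP -> //| /orP [/eqP -> //| /I3mid]]; nlia.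
have I3card : #|o1 |: (on1 |: I3)| = k.
  by rewrite cardsU1 g5 cardsU1 g4 card_Mid; nlia.
have {}e3 := e3 I3pos I3card.
have ea : (j.+2 - 2 = j)%N by nlia.
have eb : (j.+3 - 2 = j.+1)%N by nlia.
have ec : (j.+4 - 2 = j.+2)%N by nlia.
rewrite ea in e3; rewrite ec !exprS in e2; rewrite eb !exprS in e1.
have P0 : 0 < c ^+ j by apply: exprn_gt0.
set P := c ^+ j in e1 e2 e3 P0.
have a0 : 0 < x o1 by apply: xpos.
have b0 : 0 < x on1 by apply: xpos.
have s1 : x o1 + x on1 = 2 * c.
  have : c * P * (x o1 + x on1 - 2 * c) = 0.
    by rewrite -[0](subrr (2 * gamma)) -{1}e1 -e2; ring.
  move/eqP; rewrite !mulf_eq0 subr_eq0 (gt_eqF P0) (gt_eqF u0) /= => /eqP //.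
have s2 : x o1 * x on1 = c * c.
  have P2 : 0 < 2 * P by rewrite mulr_gt0 // ltr0n.
  have : (2 * P) * (x o1 * x on1 - c * c) = 0.
    by rewrite -[0](subrr (2 * gamma)) -{1}e3 -e2; ring.
  move/eqP; rewrite mulf_eq0 subr_eq0 (gt_eqF P2) /= => /eqP //.
nra.
Qed.
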